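(* Fix $r>0$ and a tiling of the plane by regular hexagons of side length $r$. For each hexagon (cell) of the tiling, its grid circle is the closed disk of radius $r$ centered at the center of the hexagon (the circumscribed disk of the hexagon). Then every closed disk of radius $r$ in the plane is contained in the union of the grid circles of at most $5$ cells of the tiling. *)

(* Defs.v *)
From Stdlib Require Import Reals ZArith List.
Open Scope R_scope.

Definition dist2 (p q : R * R) : R :=
  (fst p - fst q)^2 + (snd p - snd q)^2.

Definition in_disk (c : R * R) (rho : R) (q : R * R) : Prop :=
  dist2 q c <= rho^2.

(* A tiling of the plane by regular hexagons of side r, placed by an
   isometry: o is the center of one hexagon, (ux,uy) a unit vector.
   The hexagon centers form the triangular lattice
     o + r*sqrt 3 * (a * u + b * w),  a b : Z,
   where w is u rotated by 60 degrees. *)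
Definition hex_center (r : R) (o : R * R) (u : R * R) (ab : Z * Z) : R * R :=
  let s := r * sqrt 3 in
  let a := IZR (fst ab) in
  let b := IZR (snd ab) in
  let wx := fst u / 2 - snd u * sqrt 3 / 2 in
  let wy := snd u / 2 + fst u * sqrt 3 / 2 in
  (fst o + s * (a * fst u + b * wx), snd o + s * (a * snd u + b * wy)).

Definition grid_circle (r : R) (o u : R * R) (ab : Z * Z) (q : R * R) : Prop :=
  in_disk (hex_center r o u ab) r q.

(* Main.v *)
Require Import Defs.
From Stdlib Require Import Reals ZArith List Lra Psatz Lia.
Open Scope R_scope.
Definition Q (a b : R) := a*a + a*b + b*b.

Lemma sec0 x y : 0 <= x - y -> 0 <= x + 2*y -> 1 < 3*Q x y -> 3*Q x y <= 4 -> 3*Q (x-1) y <= 1.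
Proof.
  unfold Q; intros H1 H2 H3 H4.
  assert (Hz : 3*(x*x+x*y+y*y) <= (2*x+y)*(2*x+y)) by nra.
  destruct (Rle_dec 2 (2*x+y)).
  - nra.
  - destruct (Rle_dec 1 (2*x+y)).
    + nra.
    + nra.
Qed.

Lemma core s t x y : 0<=s -> 0<=t -> 3*Q s t <= 1 -> 3*Q (x-s) (y-t) <= 1 ->
  Q x y <= 1/3 \/ Q (x-1) y <= 1/3 \/ Q x (y-1) <= 1/3 \/ Q (x+1) (y-1) <= 1/3 \/ Q (x-1) (y+1) <= 1/3.
Proof.
  intros Hs Ht Hp Hq.
  destruct (Rle_dec (3*Q x y) 1) as [h|h]; [left; lra|].
  assert (HA : 3*Q x y <= 4).
  { assert (0 <= Q (2*s - x) (2*t-y)) by (unfold Q; pose proof (pow2_ge_0 (2*s-x + (2*t-y)/2)); pose proof (pow2_ge_0 (2*t-y)); nra). unfold Q in *. nra. }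
  assert (Hexp : Q (x-s) (y-t) = Q x y + Q s t - (s*(2*x+y) + t*(x+2*y))) by (unfold Q; ring).
  destruct (Rle_dec 0 (x-y)).
  - destruct (Rle_dec 0 (x+2*y)).
    + right; left. pose proof (sec0 x y). lra.
    + destruct (Rle_dec 0 (2*x+y)).
      * do 4 right. pose proof (sec0 (-y) (x+y)).
        replace (Q (x-1) (y+1)) with (Q (-y-1) (x+y)) by (unfold Q; ring).
        replace (Q x y) with (Q (-y) (x+y)) in * by (unfold Q; ring). lra.
      * exfalso. assert (0 <= s*(-(2*x+y))) by nra. assert (0 <= t*(-(x+2*y))) by nra. assert (0 <= Q s t) by (unfold Q; nra). lra.
  - destruct (Rle_dec 0 (2*x+y)).
    + do 2 right; left. pose proof (sec0 (x+y) (-x)).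
        replace (Q x (y-1)) with (Q (x+y-1) (-x)) by (unfold Q; ring).
        replace (Q x y) with (Q (x+y) (-x)) in * by (unfold Q; ring). lra.
    + destruct (Rle_dec 0 (x+2*y)).
      * do 3 right; left. pose proof (sec0 y (-x-y)).
        replace (Q (x+1) (y-1)) with (Q (y-1) (-x-y)) by (unfold Q; ring).
        replace (Q x y) with (Q y (-x-y)) in * by (unfold Q; ring). lra.
      * exfalso. assert (0 <= s*(-(2*x+y))) by nra. assert (0 <= t*(-(x+2*y))) by nra. assert (0 <= Q s t) by (unfold Q; nra). lra.
Qed.

Lemma tri f g : 0 <= f -> 0 <= g -> f + g <= 1 ->
  3*Q f g <= 1 \/ 3*Q (f-1) g <= 1 \/ 3*Q f (g-1) <= 1.
Proof.
  intros Hf Hg Hfg.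
  assert (E : (1-f-g)*Q f g + f*Q (f-1) g + g*Q f (g-1) = (1-f-g)*f + (1-f-g)*g + f*g) by (unfold Q; ring).
  destruct (Rle_dec (3*Q f g) 1); [left; lra|].
  destruct (Rle_dec (3*Q (f-1) g) 1); [right;left; lra|].
  destruct (Rle_dec (3*Q f (g-1)) 1); [right;right; lra|].
  exfalso.
  assert (3*((1-f-g)*f + (1-f-g)*g + f*g) <= 1) by (pose proof (pow2_ge_0 (1-f-g-f)); pose proof (pow2_ge_0 (1-f-g-g)); pose proof (pow2_ge_0 (f-g)); nra).
  assert (0 <= (1-f-g)*(3*Q f g - 1)) by nra.
  assert (0 <= f*(3*Q (f-1) g - 1)) by nra.
  assert (0 <= g*(3*Q f (g-1) - 1)) by nra.
  destruct (Rle_dec (1/3) f).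
  - assert (0 < f*(3*Q (f-1) g - 1)) by (apply Rmult_lt_0_compat; lra). lra.
  - destruct (Rle_dec (1/3) g).
    + assert (0 < g*(3*Q f (g-1) - 1)) by (apply Rmult_lt_0_compat; lra). lra.
    + assert (0 < (1-f-g)*(3*Q f g - 1)) by (apply Rmult_lt_0_compat; lra). lra.
Qed.

Lemma glue (ca cb m1 m2 n1 n2 : Z) (s t al be : R) :
  0 <= s -> 0 <= t -> 3*Q s t <= 1 ->
  al = IZR ca + s*IZR m1 + t*IZR n1 -> be = IZR cb + s*IZR m2 + t*IZR n2 ->
  (forall x y, Q (x*IZR m1 + y*IZR n1) (x*IZR m2 + y*IZR n2) = Q x y) ->
  (forall X Y, exists x y, X = x*IZR m1 + y*IZR n1 /\ Y = x*IZR m2 + y*IZR n2) ->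
  forall x y, 3*Q (x-al) (y-be) <= 1 ->
  exists ab, In ab ((ca,cb) :: (ca+m1,cb+m2)%Z :: (ca+n1,cb+n2)%Z ::
                     (ca+n1-m1,cb+n2-m2)%Z :: (ca+m1-n1,cb+m2-n2)%Z :: nil)
     /\ Q (x - IZR (fst ab)) (y - IZR (snd ab)) <= 1/3.
Proof.
  intros Hs Ht Hst Hal Hbe Hiso Hsol x y Hq.
  destruct (Hsol (x - IZR ca) (y - IZR cb)) as [X [Y [HX HY]]].
  assert (E : forall a b, Q (x - (IZR ca + a*IZR m1 + b*IZR n1)) (y - (IZR cb + a*IZR m2 + b*IZR n2)) = Q (X-a) (Y-b)).
  { intros a b. rewrite <- (Hiso (X-a) (Y-b)). f_equal; lra. }
  assert (H := core s t X Y Hs Ht Hst).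
  rewrite Hal, Hbe, E in Hq. specialize (H Hq).
  destruct H as [H|[H|[H|[H|H]]]].
  - exists (ca,cb). split; [simpl; tauto|]. simpl.
    replace (x - IZR ca) with (x - (IZR ca + 0 * IZR m1 + 0 * IZR n1)) by ring.
    replace (y - IZR cb) with (y - (IZR cb + 0 * IZR m2 + 0 * IZR n2)) by ring.
    rewrite E. replace (X - 0) with X by ring. replace (Y-0) with Y by ring. exact H.
  - exists (ca+m1,cb+m2)%Z. split; [simpl; tauto|]. simpl. rewrite !plus_IZR.
    replace (x - (IZR ca + IZR m1)) with (x - (IZR ca + 1 * IZR m1 + 0 * IZR n1)) by ring.
    replace (y - (IZR cb + IZR m2)) with (y - (IZR cb + 1 * IZR m2 + 0 * IZR n2)) by ring.
    rewrite E. replace (Y-0) with Y by ring. exact H.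
  - exists (ca+n1,cb+n2)%Z. split; [simpl; tauto|]. simpl. rewrite !plus_IZR.
    replace (x - (IZR ca + IZR n1)) with (x - (IZR ca + 0 * IZR m1 + 1 * IZR n1)) by ring.
    replace (y - (IZR cb + IZR n2)) with (y - (IZR cb + 0 * IZR m2 + 1 * IZR n2)) by ring.
    rewrite E. replace (X-0) with X by ring. exact H.
  - exists (ca+n1-m1,cb+n2-m2)%Z. split; [simpl; tauto|]. simpl. rewrite !minus_IZR, !plus_IZR.
    replace (x - (IZR ca + IZR n1 - IZR m1)) with (x - (IZR ca + (-1) * IZR m1 + 1 * IZR n1)) by ring.
    replace (y - (IZR cb + IZR n2 - IZR m2)) with (y - (IZR cb + (-1) * IZR m2 + 1 * IZR n2)) by ring.
    rewrite E. replace (X - -1) with (X+1) by ring. exact H.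
  - exists (ca+m1-n1,cb+m2-n2)%Z. split; [simpl; tauto|]. simpl. rewrite !minus_IZR, !plus_IZR.
    replace (x - (IZR ca + IZR m1 - IZR n1)) with (x - (IZR ca + 1 * IZR m1 + (-1) * IZR n1)) by ring.
    replace (y - (IZR cb + IZR m2 - IZR n2)) with (y - (IZR cb + 1 * IZR m2 + (-1) * IZR n2)) by ring.
    rewrite E. replace (Y - -1) with (Y+1) by ring. exact H.
Qed.

Lemma glue' (ca cb m1 m2 n1 n2 : Z) (s t al be : R) :
  0 <= s -> 0 <= t -> 3*Q s t <= 1 ->
  al = IZR ca + s*IZR m1 + t*IZR n1 -> be = IZR cb + s*IZR m2 + t*IZR n2 ->
  (forall x y, Q (x*IZR m1 + y*IZR n1) (x*IZR m2 + y*IZR n2) = Q x y) ->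
  (forall X Y, exists x y, X = x*IZR m1 + y*IZR n1 /\ Y = x*IZR m2 + y*IZR n2) ->
  exists cells : list (Z*Z), (length cells <= 5)%nat /\
  forall x y, 3*Q (x-al) (y-be) <= 1 ->
  exists ab, In ab cells /\ Q (x - IZR (fst ab)) (y - IZR (snd ab)) <= 1/3.
Proof.
  intros. eexists; split; [|apply (glue ca cb m1 m2 n1 n2 s t); assumption].
  simpl; lia.
Qed.

Ltac fin_case ca cb m1 m2 n1 n2 s t :=
 
  apply (glue' ca cb m1 m2 n1 n2 s t); 
  [ lra | lra | unfold Q in *; nra
  | rewrite ?plus_IZR; simpl; lra | rewrite ?plus_IZR; simpl; lra
  | intros; unfold Q; simpl; ring
  | intros ? ?; simpl ].

Lemma pure al be : exists cells : list (Z*Z), (length cells <= 5)%nat /\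
  forall x y, 3*Q (x-al) (y-be) <= 1 ->
  exists ab, In ab cells /\ Q (x - IZR (fst ab)) (y - IZR (snd ab)) <= 1/3.
Proof.
  destruct (base_Int_part al) as [Ha1 Ha2].
  destruct (base_Int_part be) as [Hb1 Hb2].
  set (a0 := Int_part al) in *. set (b0 := Int_part be) in *.
  set (f := al - IZR a0). set (g := be - IZR b0).
  assert (Hal : al = IZR a0 + f) by (unfold f; ring).
  assert (Hbe : be = IZR b0 + g) by (unfold g; ring).
  assert (0 <= f < 1) by (unfold f; lra). assert (0 <= g < 1) by (unfold g; lra).
  clearbody f g. clear Ha1 Ha2 Hb1 Hb2.
  destruct (Rle_dec (f+g) 1).
  - destruct (tri f g) as [Ht|[Ht|Ht]]; try lra.
    + fin_case a0 b0 1%Z 0%Z 0%Z 1%Z f g. exists X, Y; split; lra.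
    + fin_case (a0+1)%Z b0 (-1)%Z 1%Z (-1)%Z 0%Z g (1-f-g). exists Y, (-X-Y); split; lra.
    + fin_case a0 (b0+1)%Z 0%Z (-1)%Z 1%Z (-1)%Z (1-f-g) f. exists (-X-Y), X; split; lra.
  - destruct (tri (1-f) (1-g)) as [Ht|[Ht|Ht]]; try lra.
    + fin_case (a0+1)%Z (b0+1)%Z (-1)%Z 0%Z 0%Z (-1)%Z (1-f) (1-g). exists (-X), (-Y); split; lra.
    + fin_case a0 (b0+1)%Z 1%Z (-1)%Z 1%Z 0%Z (1-g) (f+g-1). exists (-Y), (X+Y); split; lra.
    + fin_case (a0+1)%Z b0 0%Z 1%Z (-1)%Z 1%Z (f+g-1) (1-f). exists (X+Y), (-X); split; lra.
Qed.

Definition lx (r : R) (o u q : R*R) : R :=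
  (((fst q - fst o)*fst u + (snd q - snd o)*snd u) * sqrt 3
    - (-(fst q - fst o)*snd u + (snd q - snd o)*fst u)) / (3*r).
Definition ly (r : R) (o u q : R*R) : R :=
  2*(-(fst q - fst o)*snd u + (snd q - snd o)*fst u) / (3*r).

Lemma s3 : sqrt 3 * sqrt 3 = 3.
Proof. apply sqrt_sqrt. lra. Qed.

Lemma dist_lemma r o u q1 q2 : 0 < r -> fst u ^ 2 + snd u ^ 2 = 1 ->
  dist2 q1 q2 = 3*r^2*Q (lx r o u q1 - lx r o u q2) (ly r o u q1 - ly r o u q2).
Proof.
  intros hr hu. pose proof s3 as hs.
  unfold dist2, lx, ly, Q.
  destruct q1 as [a b], q2 as [c d], o as [e h], u as [ux uy]. simpl in *.
  set (s := sqrt 3) in *. field_simplify_eq; [|lra]. replace (s^2) with 3 by (rewrite <- hs; ring).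
  replace (uy^2) with (1 - ux^2) by lra. ring.
Qed.

Lemma center_lemma r o u a b : 0 < r -> fst u ^ 2 + snd u ^ 2 = 1 ->
  lx r o u (hex_center r o u (a,b)) = IZR a /\ ly r o u (hex_center r o u (a,b)) = IZR b.
Proof.
  intros hr hu. pose proof s3 as hs.
  unfold hex_center, lx, ly.
  destruct o as [e h], u as [ux uy]. simpl in *.
  set (s := sqrt 3) in *. set (A := IZR a). set (B := IZR b).
  split; field_simplify_eq; try lra; replace (s^2) with 3 by (rewrite <- hs; ring); replace (uy^2) with (1 - ux^2) by lra; ring.
Qed.

Theorem lemma4 (r : R) (hr : 0 < r) (o u : R * R)
  (hu : fst u ^ 2 + snd u ^ 2 = 1) (p : R * R) :
  exists cells : list (Z * Z),
    (length cells <= 5)%nat /\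
    forall q : R * R, in_disk p r q ->
      exists ab, In ab cells /\ grid_circle r o u ab q.
Proof.
  destruct (pure (lx r o u p) (ly r o u p)) as [cells [Hlen Hc]].
  exists cells; split; [exact Hlen|].
  intros q Hq. unfold in_disk in Hq. rewrite (dist_lemma r o u q p hr hu) in Hq.
  assert (Hr2 : 0 < r^2) by (apply pow_lt; lra).
  destruct (Hc (lx r o u q) (ly r o u q)) as [[a b] [Hin HQ]].
  { apply (Rmult_le_reg_l (r^2)); [exact Hr2|]. lra. }
  exists (a,b); split; [exact Hin|].
  unfold grid_circle, in_disk. rewrite (dist_lemma r o u q _ hr hu).
  destruct (center_lemma r o u a b hr hu) as [E1 E2]. rewrite E1, E2.
  simpl in HQ. nra.
Qed.
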